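(* Let $K$, $A$, $B$ be real $m\times m$ matrices with $K$ and $B$ anti-symmetric and $A$ symmetric. At a fixed interface point, let $\mathbf z^{+}(t),\mathbf z^{-}(t),\breve{\mathbf z}^{+}(t),\breve{\mathbf z}^{-}(t)\in\mathbb R^m$ be continuously differentiable functions of $t$ (the right and left traces at that interface of two time-dependent piecewise polynomial vector functions $\mathbf z_h,\breve{\mathbf z}_h$). Set $\{\mathbf z\}=\tfrac12(\mathbf z^++\mathbf z^-)$, $[\mathbf z]=\mathbf z^+-\mathbf z^-$ (similarly for $\breve{\mathbf z}$), $\{K\mathbf z\cdot\breve{\mathbf z}\}=\tfrac12(K\mathbf z^+\cdot\breve{\mathbf z}^++K\mathbf z^-\cdot\breve{\mathbf z}^-)$, and define the numerical fluxes $$\widehat{K\mathbf z}=K\{\mathbf z\}+A[\mathbf z]+B\,\tfrac{d}{dt}[\mathbf z],\qquad \widehat{K\breve{\mathbf z}}=K\{\breve{\mathbf z}\}+A[\breve{\mathbf z}]+B\,\tfrac{d}{dt}[\breve{\mathbf z}],$$ and $$\mathcal F(\mathbf z,\breve{\mathbf z})=\{K\mathbf z\cdot\breve{\mathbf z}\}-\widehat{K\mathbf z}\cdot\{\breve{\mathbf z}\}+\widehat{K\breve{\mathbf z}}\cdot\{\mathbf z\}.$$ Then $$K\mathbf z^-\cdot\breve{\mathbf z}^--\widehat{K\mathbf z}\cdot\breve{\mathbf z}^-+\widehat{K\breve{\mathbf z}}\cdot\mathbf z^-=\mathcal F(\mathbf z,\breve{\mathbf z})-\tfrac12\tfrac{d}{dt}\big(B[\breve{\mathbf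 z}]\cdot[\mathbf z]\big),$$ $$K\mathbf z^+\cdot\breve{\mathbf z}^+-\widehat{K\mathbf z}\cdot\breve{\mathbf z}^++\widehat{K\breve{\mathbf z}}\cdot\mathbf z^+=\mathcal F(\mathbf z,\breve{\mathbf z})+\tfrac12\tfrac{d}{dt}\big(B[\breve{\mathbf z}]\cdot[\mathbf z]\big).$$
   Context: $\cdot$ denotes the Euclidean inner product on $\mathbb R^m$. In the paper these identities are applied at each cell interface $x_{j+1/2}$ of a one-dimensional mesh, with $\mathbf z^\pm$ the right/left limits of discontinuous piecewise polynomial functions. *)

(* Defs.v *)
From HB Require Import structures.
From mathcomp Require Import all_boot all_order all_algebra.
From mathcomp Require Import all_classical all_reals all_analysis.
Set Implicit Arguments. Unset Strict Implicit. Unset Printing Implicit Defensive.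
Import Order.TTheory GRing.Theory Num.Theory.
Import numFieldNormedType.Exports.
Local Open Scope ring_scope.

Definition dotv {R : realType} {m : nat} (u v : 'cV[R]_m) : R :=
  \sum_(i < m) u i 0 * v i 0.

Definition avgv {R : realType} {m : nat} (zp zm : 'cV[R]_m) : 'cV[R]_m :=
  2^-1 *: (zp + zm).
Definition jumpv {R : realType} {m : nat} (zp zm : 'cV[R]_m) : 'cV[R]_m :=
  zp - zm.

Definition C1fun {R : realType} {m : nat} (f : R -> 'cV[R]_m) : Prop :=
  (forall t, derivable f t 1) /\ continuous (derive1 f).

Definition flux {R : realType} {m : nat} (K A B : 'M[R]_m)
  (zp zm : R -> 'cV[R]_m) (t : R) : 'cV[R]_m :=
  K *m avgv (zp t) (zm t) + A *m jumpv (zp t) (zm t)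
  + B *m derive1 (fun s => jumpv (zp s) (zm s)) t.

Definition avgdot {R : realType} {m : nat} (K : 'M[R]_m)
  (zp zm zbp zbm : 'cV[R]_m) : R :=
  2^-1 * (dotv (K *m zp) zbp + dotv (K *m zm) zbm).

Definition Fcal {R : realType} {m : nat} (K A B : 'M[R]_m)
  (zp zm zbp zbm : R -> 'cV[R]_m) (t : R) : R :=
  avgdot K (zp t) (zm t) (zbp t) (zbm t)
  - dotv (flux K A B zp zm t) (avgv (zbp t) (zbm t))
  + dotv (flux K A B zbp zbm t) (avgv (zp t) (zm t)).

(* Main.v *)
Require Import Defs.
From HB Require Import structures.
From mathcomp Require Import all_boot all_order all_algebra.
From mathcomp Require Import all_classical all_reals all_analysis.
From mathcomp Require Import ring lra.
Import Order.TTheory GRing.Theory Num.Theory.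
Import numFieldNormedType.Exports.
Local Open Scope ring_scope.

Lemma entry_derive (R : realType) (m : nat) (f : R -> 'cV[R]_m) t k :
  derivable f t 1 -> is_derive t 1 (fun s => f s k 0) ('D_1 f t k 0).
Proof.
move=> df; rewrite derive_mx // mxE.
by apply: derivableP; move/derivable_mxP: df; apply.
Qed.

Lemma derive_dot (R : realType) (m : nat) (M : 'M[R]_m) (f g : R -> 'cV[R]_m) t :
  derivable f t 1 -> derivable g t 1 ->
  derive1 (fun s => dotv (M *m f s) (g s)) t =
  dotv (M *m derive1 f t) (g t) + dotv (M *m f t) (derive1 g t).
Proof.
move=> df dg; rewrite !derive1E.
set h := fun (i : 'I_m) (k : 'I_m) (s : R) => M i k * (f s k 0 * g s i 0).
have -> : (fun s => dotv (M *m f s) (g s)) = \sum_(i < m) \sum_(k < m) h i k.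
  apply/funext => s; rewrite /dotv !fct_sumE; apply: eq_bigr => i _.
  rewrite mxE big_distrl fct_sumE; apply: eq_bigr => k _.
  by rewrite /h mulrA.
have H : forall i k, is_derive t 1 (h i k)
   (M i k * (f t k 0 * 'D_1 g t i 0 + g t i 0 * 'D_1 f t k 0)).
  move=> i k; rewrite /h.
  have := @is_deriveM _ _ (fun s => f s k 0) (fun s => g s i 0) t 1 _ _
     (@entry_derive _ _ _ _ k df) (@entry_derive _ _ _ _ i dg).
  move=> HH.
  have := @is_deriveZ _ _ _ _ (M i k) t 1 _ HH.
  by [].
rewrite derive_val.
rewrite /dotv -big_split /=; apply: eq_bigr => i _.
rewrite !mxE big_distrl big_distrl -big_split /=; apply: eq_bigr => k _.
rewrite /=. ring.
Qed.

Lemma dotvDl (R : realType) (m : nat) (u w v : 'cV[R]_m) : dotv (u + w) v = dotv u v + dotv w v.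
Proof. by rewrite /dotv -big_split; apply: eq_bigr => i _; rewrite mxE mulrDl. Qed.
Lemma dotvDr (R : realType) (m : nat) (u w v : 'cV[R]_m) : dotv v (u + w) = dotv v u + dotv v w.
Proof. by rewrite /dotv -big_split; apply: eq_bigr => i _; rewrite mxE mulrDr. Qed.
Lemma dotvNl (R : realType) (m : nat) (u v : 'cV[R]_m) : dotv (- u) v = - dotv u v.
Proof. by rewrite /dotv -sumrN; apply: eq_bigr => i _; rewrite mxE mulNr. Qed.
Lemma dotvNr (R : realType) (m : nat) (u v : 'cV[R]_m) : dotv v (- u) = - dotv v u.
Proof. by rewrite /dotv -sumrN; apply: eq_bigr => i _; rewrite mxE mulrN. Qed.
Lemma dotvZl (R : realType) (m : nat) (a : R) (u v : 'cV[R]_m) : dotv (a *: u) v = a * dotv u v.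
Proof. by rewrite /dotv mulr_sumr; apply: eq_bigr => i _; rewrite mxE mulrA. Qed.
Lemma dotvZr (R : realType) (m : nat) (a : R) (u v : 'cV[R]_m) : dotv v (a *: u) = a * dotv v u.
Proof. by rewrite /dotv mulr_sumr; apply: eq_bigr => i _; rewrite mxE mulrCA. Qed.
Lemma dotvT (R : realType) (m : nat) (M : 'M[R]_m) (u v : 'cV[R]_m) :
  dotv (M *m u) v = dotv (M^T *m v) u.
Proof.
rewrite /dotv; under eq_bigr do rewrite mxE big_distrl.
under [RHS]eq_bigr do rewrite mxE big_distrl.
rewrite exchange_big; apply: eq_bigr => i _; apply: eq_bigr => j _.
by rewrite mxE /=; ring.
Qed.
Lemma alg (R : realType) (m : nat) (K A B : 'M[R]_m)
  (sK : forall x y : 'cV_m, dotv (K *m x) y = - dotv (K *m y) x)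
  (sA : forall x y : 'cV_m, dotv (A *m x) y = dotv (A *m y) x)
  (sB : forall x y : 'cV_m, dotv (B *m x) y = - dotv (B *m y) x)
  (p q bp bq D Db : 'cV[R]_m) :
  dotv (K *m q) bq -
  dotv (K *m (2^-1 *: (p + q)) + A *m (p - q) + B *m D) bq +
  dotv (K *m (2^-1 *: (bp + bq)) + A *m (bp - bq) + B *m Db) q =
  2^-1 * (dotv (K *m p) bp + dotv (K *m q) bq) -
  dotv (K *m (2^-1 *: (p + q)) + A *m (p - q) + B *m D)
    (2^-1 *: (bp + bq)) +
  dotv (K *m (2^-1 *: (bp + bq)) + A *m (bp - bq) + B *m Db)
    (2^-1 *: (p + q)) -
  2^-1 * (dotv (B *m Db) (p - q) + dotv (B *m (bp - bq)) D) /\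
  dotv (K *m p) bp -
  dotv (K *m (2^-1 *: (p + q)) + A *m (p - q) + B *m D) bp +
  dotv (K *m (2^-1 *: (bp + bq)) + A *m (bp - bq) + B *m Db) p =
  2^-1 * (dotv (K *m p) bp + dotv (K *m q) bq) -
  dotv (K *m (2^-1 *: (p + q)) + A *m (p - q) + B *m D)
    (2^-1 *: (bp + bq)) +
  dotv (K *m (2^-1 *: (bp + bq)) + A *m (bp - bq) + B *m Db)
    (2^-1 *: (p + q)) +
  2^-1 * (dotv (B *m Db) (p - q) + dotv (B *m (bp - bq)) D).
Proof.
rewrite !mulmxDr !mulmxN -!scalemxAr.
rewrite !(dotvDl, dotvDr, dotvNl, dotvNr, dotvZl, dotvZr).
rewrite !mulmxDr !(dotvDl, dotvDr).
have h0 := sK p p.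
have h1 := sK p q.
have h2 := sK p bp.
have h3 := sK p bq.
have h4 := sK q q.
have h5 := sK q bp.
have h6 := sK q bq.
have h7 := sK bp bp.
have h8 := sK bp bq.
have h9 := sK bq bq.
have h10 := sA p p.
have h11 := sA p q.
have h12 := sA p bp.
have h13 := sA p bq.
have h14 := sA q q.
have h15 := sA q bp.
have h16 := sA q bq.
have h17 := sA bp bp.
have h18 := sA bp bq.
have h19 := sA bq bq.
have h20 := sB D bp.
have h21 := sB D bq.
have h22 := sB Db p.
have h23 := sB Db q.
split; lra.
Qed.
Theorem lemma3p1 (R : realType) (m : nat) (K A B : 'M[R]_m)
  (hK : K^T = - K) (hA : A^T = A) (hB : B^T = - B)
  (zp zm zbp zbm : R -> 'cV[R]_m)
  (hzp : C1fun zp) (hzm : C1fun zm) (hzbp : C1fun zbp) (hzbm : C1fun zbm)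
  (t : R) :
  let G := fun s => dotv (B *m jumpv (zbp s) (zbm s)) (jumpv (zp s) (zm s)) in
  dotv (K *m zm t) (zbm t) - dotv (flux K A B zp zm t) (zbm t)
    + dotv (flux K A B zbp zbm t) (zm t)
  = Fcal K A B zp zm zbp zbm t - 2^-1 * derive1 G t
  /\
  dotv (K *m zp t) (zbp t) - dotv (flux K A B zp zm t) (zbp t)
    + dotv (flux K A B zbp zbm t) (zp t)
  = Fcal K A B zp zm zbp zbm t + 2^-1 * derive1 G t.
Proof.
move=> G.
have da : derivable (fun s => jumpv (zp s) (zm s)) t 1.
  exact: (derivableB (hzp.1 t) (hzm.1 t)).
have db : derivable (fun s => jumpv (zbp s) (zbm s)) t 1.
  exact: (derivableB (hzbp.1 t) (hzbm.1 t)).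
have -> : derive1 G t = _ := @derive_dot _ _ B _ _ t db da.
rewrite /Fcal /flux /avgdot.
set D := derive1 (fun s => jumpv (zp s) (zm s)) t.
set Db := derive1 (fun s => jumpv (zbp s) (zbm s)) t.
have sK : forall x y, dotv (K *m x) y = - dotv (K *m y) x.
  by move=> x y; rewrite dotvT hK mulNmx dotvNl.
have sA : forall x y, dotv (A *m x) y = dotv (A *m y) x.
  by move=> x y; rewrite dotvT hA.
have sB : forall x y, dotv (B *m x) y = - dotv (B *m y) x.
  by move=> x y; rewrite dotvT hB mulNmx dotvNl.
rewrite /avgv /jumpv /=.
rewrite /avgv /jumpv.
exact: alg.
Qed.
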